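(* Let $X$ be an $X$-set parameter and let $G$ be a graph with no isolated vertices. If there exists an automorphism $\varphi$ of $\mathscr{X}^{\rm TAR}(G)$ with $\varphi(V(G))\neq V(G)$, then $\mathscr{X}^{\rm TAR}(G)$ has a perfect matching.
   Context: All graphs are simple, finite, with nonempty vertex set. An $X$-set parameter is a graph parameter $X(G)$ defined as the minimum cardinality of an $X$-set of $G$, where the $X$-sets of each graph are subsets of its vertex set determined by some property satisfying: (1) supersets (within $V(G)$) of $X$-sets are $X$-sets; (2) the empty set is never an $X$-set; (3) an $X$-set of a disconnected graph is the union of an $X$-set of each component; (4) if $G$ has no isolated vertices, every set of $|V(G)|-1$ vertices is an $X$-set. The $X$-TAR graph $\mathscr{X}^{\rm TAR}(G)$ has as vertices all $X$-sets of $G$ (so $V(G)$ itself is a vertex), with $S_1,S_2$ adjacent iff $|S_1\ominus S_2|=1$ (symmetric difference). *)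

(* Defs.v *)
From mathcomp Require Import all_boot.
From mathcomp Require Import fingroup perm.
Set Implicit Arguments. Unset Strict Implicit. Unset Printing Implicit Defensive.

Definition simple_graph (T : finType) (e : rel T) : Prop :=
  [/\ symmetric e, irreflexive e & 0 < #|T|].

Definition no_isolated (T : finType) (e : rel T) : Prop :=
  forall x : T, exists y : T, e x y.

Definition disconnected (T : finType) (e : rel T) : Prop :=
  exists x y : T, ~~ connect e x y.

Definition gcomp (T : finType) (e : rel T) (x : T) : {set T} :=
  [set y | connect e x y].

Definition subV (T : finType) (A : {set T}) : finType := {y : T | y \in A}.

Definition induced (T : finType) (e : rel T) (A : {set T}) : rel (subV A) :=
  fun u v => e (val u) (val v).
Arguments induced [T] e A.

Definition restr (T : finType) (A S : {set T}) : {set subV A} :=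
  [set u : subV A | val u \in S].
Arguments restr [T] A S.

(* A family of "X-sets": for every graph (T, e), a predicate on subsets. *)
Definition Xfamily := forall T : finType, rel T -> {set T} -> bool.

Definition Xset_parameter (X : Xfamily) : Prop :=
  [/\
      (forall (T : finType) (e : rel T), simple_graph e ->
         forall S S' : {set T}, S \subset S' -> X T e S -> X T e S'),
      (forall (T : finType) (e : rel T), simple_graph e -> ~~ X T e set0),
      (* (3) X-sets of a disconnected graph are exactly unions of X-sets
             of each component *)
      (forall (T : finType) (e : rel T), simple_graph e -> disconnected e ->
         forall S : {set T},
           X T e S = [forall x : T,
                        X (subV (gcomp e x)) (induced e (gcomp e x))
                          (restr (gcomp e x) S)])
    &
      (forall (T : finType) (e : rel T), simple_graph e -> no_isolated e ->
         forall S : {set T}, #|S| = #|T| - 1 -> X T e S)].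

Definition TARV (X : Xfamily) (T : finType) (e : rel T) : finType :=
  {S : {set T} | X T e S}.

Definition symdiff (T : finType) (A B : {set T}) : {set T} :=
  (A :\: B) :|: (B :\: A).

Definition TARadj (X : Xfamily) (T : finType) (e : rel T) : rel (TARV X e) :=
  fun S1 S2 => #|symdiff (val S1) (val S2)| == 1.
Arguments TARadj X [T] e.

Definition graph_automorphism (V : finType) (adj : rel V) (phi : {perm V}) :=
  forall u v : V, adj (phi u) (phi v) = adj u v.

Definition perfect_matching (V : finType) (adj : rel V) (M : {set {set V}}) :=
  (forall m, m \in M -> exists u v : V, [/\ u != v, adj u v & m = [set u; v]])
  /\ (forall x : V, #|[set m in M | x \in m]| = 1).

Definition has_perfect_matching (V : finType) (adj : rel V) : Prop :=
  exists M : {set {set V}}, perfect_matching adj M.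

(* Main.v *)
Require Import Defs.
From mathcomp Require Import all_boot.
From mathcomp Require Import fingroup perm.
From mathcomp Require Import zify.
Set Implicit Arguments. Unset Strict Implicit. Unset Printing Implicit Defensive.

Definition reach (V : finType) (adj : rel V) (u : V) (k : nat) : {set V} :=
  iter k (fun R => R :|: [set y | [exists x in R, adj x y]]) [set u].

Lemma reachS (V : finType) (adj : rel V) u k :
  reach adj u k.+1 = reach adj u k :|: [set y | [exists x in reach adj u k, adj x y]].
Proof. by []. Qed.

Lemma reach0 (V : finType) (adj : rel V) u : reach adj u 0 = [set u].
Proof. by []. Qed.

Lemma reach_perm (V : finType) (adj : rel V) (phi : {perm V})
  (H : graph_automorphism adj phi) u k y :
  (phi y \in reach adj (phi u) k) = (y \in reach adj u k).
Proof.
elim: k y => [|k IH] y.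
  by rewrite !reach0 !in_set1 (inj_eq perm_inj).
rewrite reachS [in RHS]reachS !in_setU IH !in_set; congr (_ || _).
apply/existsP/existsP => [[x /andP [Hx Ha]]| [x /andP [Hx Ha]]].
- exists (phi^-1 x)%g. by rewrite -IH permKV Hx /= -H permKV.
- exists (phi x). by rewrite IH Hx H.
Qed.

Definition Dsum (V : finType) (adj : rel V) (u : V) (K : nat) :=
  \sum_(k < K) \sum_(A : V) (A \notin reach adj u k : nat).

Lemma Dsum_perm (V : finType) (adj : rel V) (phi : {perm V})
  (H : graph_automorphism adj phi) u K :
  Dsum adj (phi u) K = Dsum adj u K.
Proof.
apply: eq_bigr => k _.
rewrite (reindex_inj (@perm_inj _ phi)) /=.
by apply: eq_bigr => A _; rewrite reach_perm.
Qed.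

Lemma sum_lt K m : \sum_(k < K) (k < m : nat) = minn K m.
Proof.
elim: K => [|K IH]; first by rewrite big_ord0 min0n.
rewrite big_ord_recr /= IH.
case: (ltnP K m) => h; rewrite ?h; lia.
Qed.

Lemma symdiffC (T : finType) (a b : {set T}) : symdiff a b = symdiff b a.
Proof. by rewrite /symdiff setUC. Qed.

Lemma symdiff_tri (T : finType) (a b c : {set T}) :
  #|symdiff a c| <= #|symdiff a b| + #|symdiff b c|.
Proof.
apply: leq_trans (leq_card_setU _ _).
apply: subset_leq_card; apply/subsetP => z.
rewrite !in_setU !in_setD.
by case: (z \in a); case: (z \in b); case: (z \in c).
Qed.

Lemma card_pred (V : finType) (P : pred V) :
  \sum_(A : V) (P A : nat) = #|[set A | P A]|.
Proof.
rewrite -sum1_card [in RHS]big_mkcond /=; apply: eq_bigr => A _.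
by rewrite inE; case: (P A).
Qed.

Lemma reach_lb (X : Xfamily) (T : finType) (e : rel T) (u A : TARV X e) k :
  A \in reach (TARadj X e) u k -> #|symdiff (val A) (val u)| <= k.
Proof.
elim: k A => [|k IH] A.
  by rewrite reach0 in_set1 => /eqP ->; rewrite /symdiff setDv setU0 cards0.
rewrite reachS in_setU => /orP [/IH Hk | ]; first exact: leqW.
rewrite in_set => /existsP [x /andP [Hx Ha]].
have := IH _ Hx.
have := symdiff_tri (val A) (val x) (val u).
move: Ha; rewrite /TARadj symdiffC => /eqP ->. lia.
Qed.

Lemma reach_ub (X : Xfamily) (T : finType) (e : rel T)
  (H1 : forall S S' : {set T}, S \subset S' -> X T e S -> X T e S')
  (u : TARV X e) (Hu : val u = [set: T]) k (A : TARV X e) :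
  #|~: val A| <= k -> A \in reach (TARadj X e) u k.
Proof.
elim: k A => [|k IH] A H.
  rewrite reach0 in_set1; apply/eqP/val_inj; rewrite Hu.
  move: H; rewrite leqn0 cards_eq0 => /eqP H.
  by rewrite -(setCK (val A)) H setC0.
rewrite reachS in_setU.
case: (leqP #|~: val A| k) => Hk; first by rewrite IH.
have : 0 < #|~: val A| by lia.
rewrite card_gt0 => /set0Pn [z Hz].
have HB : X T e (z |: val A) by apply: (H1 (val A)); [exact: subsetUr | exact: valP].
pose B : TARV X e := exist _ (z |: val A) HB.
have HzA : z \notin val A by rewrite -in_setC.
have HB' : B \in reach (TARadj X e) u k.
  apply: IH => /=.
  rewrite setCU.
  have -> : ~: [set z] :&: ~: val A = (~: val A) :\ z.
    by apply/setP => y; rewrite !inE andbC.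
  move: H; rewrite (cardsD1 z (~: val A)) Hz /=. lia.
apply/orP; right; rewrite in_set; apply/existsP; exists B; rewrite HB' /=.
rewrite /TARadj /=.
have -> : symdiff (z |: val A) (val A) = [set z].
  apply/setP => y; rewrite !inE.
  case: (eqVneq y z) => [->|hy] /=; first by rewrite (negbTE HzA).
  by case: (y \in val A).
by rewrite cards1.
Qed.

Lemma add_card (X : Xfamily) (T : finType) (e : rel T)
  (H1 : forall S S' : {set T}, S \subset S' -> X T e S -> X T e S') (x : T) :
  #|[set A : TARV X e | x \notin val A]| <= #|[set A : TARV X e | x \in val A]|
  /\ (#|[set A : TARV X e | x \in val A]| <= #|[set A : TARV X e | x \notin val A]| ->
      forall A : TARV X e, x \in val A -> X T e (val A :\ x)).
Proof.
pose f (A : TARV X e) : TARV X e := insubd A (x |: val A).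
have fv : forall A, val (f A) = x |: val A.
  by move=> A; rewrite val_insubd (H1 _ _ (subsetUr _ _) (valP A)).
set P := [set A : TARV X e | x \notin val A].
set Q := [set A : TARV X e | x \in val A].
have finj : {in P &, injective f}.
  move=> A B; rewrite !inE => hA hB /(congr1 val); rewrite !fv => h.
  by apply: val_inj; rewrite -(setU1K hA) -(setU1K hB) h.
have fsub : f @: P \subset Q.
  by apply/subsetP => _ /imsetP [A _ ->]; rewrite inE fv setU11.
have cP : #|f @: P| = #|P| by rewrite card_in_imset.
split; first by rewrite -cP; apply: subset_leq_card.
move=> hle.
have EQ : f @: P = Q by apply/eqP; rewrite eqEcard fsub cP hle.
move=> A hA.
have : A \in f @: P by rewrite EQ inE.
case/imsetP => B; rewrite inE => hB ->.
by rewrite fv setU1K //; exact: valP.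
Qed.

Theorem proposition2p17 (X : Xfamily) (T : finType) (e : rel T) :
  Xset_parameter X -> simple_graph e -> no_isolated e ->
  (exists phi : {perm TARV X e},
     graph_automorphism (TARadj X e) phi /\
     exists u : TARV X e, val u = [set: T] /\ val (phi u) != [set: T]) ->
  has_perfect_matching (TARadj X e).
Proof.
move=> [H1 _ _ _] Hs _ [phi [Haut [u [Hu HS]]]].
have H1' := H1 T e Hs.
set S := val (phi u) in HS.
set K := #|T|.
have Hlow : \sum_(A : TARV X e) #|symdiff (val A) S| <= Dsum (TARadj X e) (phi u) K.
  rewrite /Dsum exchange_big /=; apply: leq_sum => A _.
  have hm : #|symdiff (val A) S| <= K by apply: max_card.
  have -> : #|symdiff (val A) S| = minn K #|symdiff (val A) S| by lia.
  rewrite -sum_lt; apply: leq_sum => k _.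
  case: (ltnP k #|symdiff (val A) S|) => //= hk.
  rewrite lt0b; apply/negP => /reach_lb h; move: hk; rewrite ltnNge => /negP; apply; exact: h.
have Hup : Dsum (TARadj X e) u K <= \sum_(A : TARV X e) #|~: val A|.
  rewrite /Dsum exchange_big /=; apply: leq_sum => A _.
  apply: (@leq_trans (\sum_(k < K) (k < #|~: val A| : nat))); last first.
    by rewrite sum_lt geq_minr.
  apply: leq_sum => k _.
  case: (ltnP k #|~: val A|) => hk; first exact: leq_b1.
  by rewrite (reach_ub H1' Hu hk).
have Heq := Dsum_perm Haut u K.
pose c1 x := \sum_(A : TARV X e) (x \in symdiff (val A) S : nat).
pose c2 x := \sum_(A : TARV X e) (x \notin val A : nat).
have E1 : \sum_(A : TARV X e) #|symdiff (val A) S| = \sum_x c1 x.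
  rewrite /c1 exchange_big /=; apply: eq_bigr => A _; rewrite card_pred.
  by apply: eq_card => x; rewrite inE.
have E2 : \sum_(A : TARV X e) #|~: val A| = \sum_x c2 x.
  rewrite /c2 exchange_big /=; apply: eq_bigr => A _; rewrite card_pred.
  by apply: eq_card => x; rewrite !inE.
have Hsum : \sum_x c1 x <= \sum_x c2 x.
  by rewrite -E1 -E2; apply: leq_trans Hlow _; rewrite Heq.
have c1S : forall x, x \notin S -> c1 x = #|[set A : TARV X e | x \in val A]|.
  move=> x hx; rewrite /c1 -card_pred; apply: eq_bigr => A _.
  by rewrite !inE (negbTE hx) /=; case: (x \in sval A).
have Hc : forall x, c2 x <= c1 x.
  move=> x; case: (boolP (x \in S)) => hx.
    apply: eq_leq; apply: eq_bigr => A _; rewrite !inE hx /=.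
    by case: (x \in val A).
  rewrite c1S // /c2 card_pred.
  by case: (add_card H1' x).
have [w Hw] : exists w, w \notin S.
  have /set0Pn [w] : ~: S != set0.
    apply: contra HS => /eqP H0; apply/eqP/setP => x; rewrite inE.
    apply/negPn/negP => hx.
    have : x \in ~: S by rewrite inE.
    by rewrite H0 inE.
  by rewrite inE => hw; exists w.
have Hw1 : c1 w <= c2 w.
  move: Hsum; rewrite (bigD1 w) //= [X in _ <= X](bigD1 w) //=.
  have : \sum_(x | x != w) c2 x <= \sum_(x | x != w) c1 x.
    by apply: leq_sum => x _; exact: Hc.
  lia.
have Hclos : forall A : TARV X e, w \in val A -> X T e (val A :\ w).
  apply: (proj2 (add_card H1' w)).
  by rewrite -c1S // /c2 -card_pred in Hw1 *.
pose ts (A : TARV X e) := if w \in val A then val A :\ w else w |: val A.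
pose tog (A : TARV X e) : TARV X e := insubd A (ts A).
have tv : forall A, val (tog A) = ts A.
  move=> A; rewrite val_insubd /ts.
  case: (boolP (w \in val A)) => h.
    by rewrite Hclos.
  by rewrite (H1' _ _ (subsetUr _ _) (valP A)).
have tt : forall A, tog (tog A) = A.
  move=> A; apply: val_inj; rewrite tv /ts tv /ts.
  case: (boolP (w \in val A)) => h.
    by rewrite setD11 setD1K.
  by rewrite setU11 setU1K.
have tadj : forall A, TARadj X e A (tog A).
  move=> A; rewrite /TARadj tv.
  have -> : symdiff (val A) (ts A) = [set w]; last by rewrite cards1.
  apply/setP => y; rewrite /symdiff /ts.
  case: (boolP (w \in val A)) => h; rewrite !inE;
    case: (eqVneq y w) => [->|hy] /=; rewrite ?h //=;
    by case: (y \in val A).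
have tneq : forall A, A != tog A.
  move=> A; apply/eqP => h; have := tadj A.
  by rewrite -h /TARadj /symdiff setDv setU0 cards0.
exists [set [set A; tog A] | A : TARV X e]; split.
  move=> m /imsetP [A _ ->]; exists A, (tog A); split => //.
move=> x.
have -> : [set m in [set [set A; tog A] | A : TARV X e] | x \in m] = [set [set x; tog x]].
  apply/setP => m; rewrite !inE.
  apply/andP/eqP => [[/imsetP [A _ ->]] | ->].
    rewrite !inE => /orP [/eqP -> | /eqP ->] //.
    by rewrite tt setUC.
  by split; [apply/imsetP; exists x | rewrite set21].
by rewrite cards1.
Qed.
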